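(* For fixed positive integers $x$ and $y$, the expected number of isolated vertices in the task-dependency graph generated by the $(x,y)$ edge-addition process on $n$ vertices is $o(1)$ as $n\to\infty$.
   Context: A task-dependency graph is a finite directed acyclic graph (no loops, no multiple edges). A vertex is initial if it has in-degree $0$ and terminal if it has out-degree $0$ (an isolated vertex is both). An $(x,y)$ task-dependency graph has exactly $x$ initial and exactly $y$ terminal vertices. The $(x,y)$ edge-addition process on $n$ vertices: start with the empty graph on $\{1,\dots,n\}$ and repeatedly add, uniformly at random, an edge $(a,b)$ with $a<b$ not yet present; if an addition would cause fewer than $x$ initial vertices or fewer than $y$ terminal vertices, it is cancelled. The process halts if the graph after some edge addition is an $(x,y)$ task-dependency graph, or if no more edges can be added; the result is the final graph. *)

(* Defs.v *)
From mathcomp Require Import all_boot all_order all_algebra.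
Set Implicit Arguments. Unset Strict Implicit. Unset Printing Implicit Defensive.
Import Order.TTheory GRing.Theory Num.Theory.

(* A graph on the vertex set 'I_n (= {0,...,n-1}, standing for {1,...,n}) is
   its set of directed edges (a,b); the process only ever creates edges a < b. *)
Definition initialv (n : nat) (E : {set 'I_n * 'I_n}) : {set 'I_n} :=
  [set v : 'I_n | [forall u : 'I_n, (u, v) \notin E]].
Definition terminalv (n : nat) (E : {set 'I_n * 'I_n}) : {set 'I_n} :=
  [set v : 'I_n | [forall w : 'I_n, (v, w) \notin E]].
Definition isolatedv (n : nat) (E : {set 'I_n * 'I_n}) : {set 'I_n} :=
  initialv E :&: terminalv E.

Definition is_tdg (n x y : nat) (E : {set 'I_n * 'I_n}) : bool :=
  (#|initialv E| == x) && (#|terminalv E| == y).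

(* e = (a,b), a < b, not present, and adding it is not cancelled *)
Definition addable (n x y : nat) (E : {set 'I_n * 'I_n}) (e : 'I_n * 'I_n) : bool :=
  [&& (e.1 < e.2)%N, e \notin E, (x <= #|initialv (e |: E)|)%N
    & (y <= #|terminalv (e |: E)|)%N].

(* final_prob n x y k E F = probability that the (x,y) edge-addition process,
   currently at graph E, ends with final graph F (k = fuel; each step adds an
   edge, so k = n*n is never exhausted). The next effective addition is uniform
   among the non-cancelled candidate edges (cancelled draws change nothing). *)
Fixpoint final_prob (n x y k : nat) (E F : {set 'I_n * 'I_n}) {struct k} : rat :=
  match k with
  | 0 => (E == F)%:R
  | k'.+1 =>
      let A := [set e | addable x y E e] in
      if A == set0 then (E == F)%:R
      else \sum_(e in A) (#|A|%:R)^-1 *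
             (if is_tdg x y (e |: E) then ((e |: E) == F)%:R
              else final_prob x y k' (e |: E) F)
  end%R.

Definition expected_isolated (n x y : nat) : rat :=
  (\sum_(F : {set 'I_n * 'I_n}) final_prob x y (n * n) set0 F * (#|isolatedv F|)%:R)%R.

(* Main.v *)
Require Import Defs.
From mathcomp Require Import all_boot all_order all_algebra.
From mathcomp Require Import zify ring lra.
Import Order.TTheory GRing.Theory Num.Theory.
Set Implicit Arguments. Unset Strict Implicit.

Lemma I_sub n (e : 'I_n * 'I_n) E : initialv (e |: E) \subset initialv E.
Proof.
apply/subsetP => v; rewrite !inE => /forallP H; apply/forallP => u.
by have := H u; rewrite !inE negb_or => /andP[_].
Qed.

Lemma T_sub n (e : 'I_n * 'I_n) E : terminalv (e |: E) \subset terminalv E.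
Proof.
apply/subsetP => v; rewrite !inE => /forallP H; apply/forallP => u.
by have := H u; rewrite !inE negb_or => /andP[_].
Qed.

Lemma iso_sub n (e : 'I_n * 'I_n) E : isolatedv (e |: E) \subset isolatedv E.
Proof. rewrite /isolatedv. apply: setISS; [exact: I_sub|exact: T_sub]. Qed.

Lemma I_add n (e : 'I_n * 'I_n) E : initialv E :\ e.2 \subset initialv (e |: E).
Proof.
apply/subsetP => v; rewrite !inE => /andP[hv /forallP H]; apply/forallP => u.
rewrite !inE negb_or H andbT; apply/eqP => he; move: hv; by rewrite -he eqxx.
Qed.

Lemma T_add n (e : 'I_n * 'I_n) E : terminalv E :\ e.1 \subset terminalv (e |: E).
Proof.
apply/subsetP => v; rewrite !inE => /andP[hv /forallP H]; apply/forallP => u.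
rewrite !inE negb_or H andbT; apply/eqP => he; move: hv; by rewrite -he eqxx.
Qed.

Lemma cardI_add n (e : 'I_n * 'I_n) E :
  (#|initialv E| <= #|initialv (e |: E)| + 1)%N.
Proof.
rewrite (cardsD1 e.2) addnC leq_add //. 1: apply: subset_leq_card; apply: I_add.
by case: (_ \in _).
Qed.

Lemma cardT_add n (e : 'I_n * 'I_n) E :
  (#|terminalv E| <= #|terminalv (e |: E)| + 1)%N.
Proof.
rewrite (cardsD1 e.1) addnC leq_add //; first by apply: subset_leq_card; apply: T_add.
by case: (_ \in _).
Qed.

Lemma addable_pre n x y (E : {set 'I_n * 'I_n}) e :
  (x < #|initialv E|)%N -> (y < #|terminalv E|)%N ->
  addable x y E e = (e.1 < e.2)%N && (e \notin E).
Proof.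
move=> hx hy; rewrite /addable.
have h1 := cardI_add e E; have h2 := cardT_add e E.
have -> : (x <= #|initialv (e |: E)|)%N by lia.
have -> : (y <= #|terminalv (e |: E)|)%N by lia.
by rewrite !andbT.
Qed.

Lemma iso_touch n (e : 'I_n * 'I_n) E v :
  (e.1 == v) || (e.2 == v) -> v \notin isolatedv (e |: E).
Proof.
case: e => a b /= /orP[] /eqP <-; rewrite !inE negb_and; apply/orP.
  right; apply/forallPn; exists b; by rewrite !inE eqxx.
left; apply/forallPn; exists a; by rewrite !inE eqxx.
Qed.


Definition Wl n x : {set 'I_n} := [set u : 'I_n | (u <= x.+1)%N].
Definition Wr n y : {set 'I_n} := [set u : 'I_n | (n <= u + y.+2)%N].

Lemma Wl_le n x : (#|Wl n x| <= x.+2)%N.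
Proof.
pose f (u : 'I_n) : 'I_x.+2 := insubd ord0 (val u).
rewrite -(card_in_imset (f := f)); first by rewrite -[X in (_ <= X)%N](card_ord x.+2) max_card.
move=> u1 u2; rewrite !inE => h1 h2 /(congr1 val); rewrite /f !insubdK //; first exact: val_inj.
Qed.

Lemma Wl_ge n x : (x.+2 <= n)%N -> (x.+2 <= #|Wl n x|)%N.
Proof.
move=> H.
pose g (i : 'I_x.+2) : 'I_n := Ordinal (leq_trans (ltn_ord i) H).
have <- : #|g @: setT| = x.+2.
  rewrite card_in_imset ?cardsT ?card_ord // => i j _ _ /(congr1 val) /= h.
  exact: val_inj.
apply: subset_leq_card; apply/subsetP => u /imsetP[i _ ->]; rewrite inE /=.
by rewrite -ltnS ltn_ord.
Qed.

Lemma Wr_le n y : (#|Wr n y| <= y.+2)%N.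
Proof.
pose f (u : 'I_n) : 'I_y.+2 := insubd ord0 (n - (val u).+1).
rewrite -(card_in_imset (f := f)); first by rewrite -[X in (_ <= X)%N](card_ord y.+2) max_card.
move=> u1 u2; rewrite !inE => h1 h2 /(congr1 val); rewrite /f !insubdK //.
- move=> h; apply: val_inj => /=; simpl in h; have := ltn_ord u1; have := ltn_ord u2; lia.
- rewrite unfold_in /=; lia.
- rewrite unfold_in /=; lia.
Qed.

Lemma Wr_ge n y : (y.+2 <= n)%N -> (y.+2 <= #|Wr n y|)%N.
Proof.
move=> H.
have hlt : forall i : 'I_y.+2, (n - i.+1 < n)%N by move=> i; have := ltn_ord i; lia.
pose g (i : 'I_y.+2) : 'I_n := Ordinal (hlt i).
have <- : #|g @: setT| = y.+2.
  rewrite card_in_imset ?cardsT ?card_ord // => i j _ _ /(congr1 val) /= h.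
  apply: val_inj => /=; have := ltn_ord i; have := ltn_ord j; lia.
apply: subset_leq_card; apply/subsetP => u /imsetP[i _ ->]; rewrite inE /=.
have := ltn_ord i; lia.
Qed.

Lemma m_add n (W I I' : {set 'I_n}) a :
  I :\ a \subset I' -> (#|W :\: I'| <= #|W :\: I| + (a \in W))%N.
Proof.
move=> hs; case h: (a \in W).
  apply: leq_trans (_ : #|a |: (W :\: I)| <= _)%N; last by rewrite cardsU1; case: (_ \notin _); lia.
  apply: subset_leq_card; apply/subsetP => u; rewrite !inE => /andP[hu hw].
  case: eqP => //= hua; rewrite hw andbT; apply: contra hu => hI.
  by apply: (subsetP hs); rewrite !inE hI andbT; apply/eqP.
rewrite addn0; apply: subset_leq_card; apply/subsetP => u; rewrite !inE => /andP[hu hw].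
rewrite hw andbT; apply: contra hu => hI.
by apply: (subsetP hs); rewrite !inE hI andbT; apply: contraT; rewrite negbK => /eqP hh; rewrite -hh hw in h.
Qed.

Lemma m_post n (W I : {set 'I_n}) x :
  (x.+2 <= #|W|)%N -> (#|I| <= x)%N -> (2 <= #|W :\: I|)%N.
Proof.
move=> h1 h2; have := cardsID I W.
have : (#|W :&: I| <= #|I|)%N by apply: subset_leq_card; apply: subsetIr.
lia.
Qed.

Lemma cardACl n x (A : {set 'I_n * 'I_n}) :
  (forall e, e \in A -> (e.1 < e.2)%N) ->
  (#|A :&: [set e | e.2 \in Wl n x]| <= x.+2 * x.+2)%N.
Proof.
move=> hA; apply: leq_trans (_ : #|setX (Wl n x) (Wl n x)| <= _)%N.
  apply: subset_leq_card; apply/subsetP => e; rewrite !inE => /andP[eA].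
  have := hA e eA; case: e eA => a b /= _ hab hb; rewrite hb andbT; lia.
by rewrite cardsX leq_mul // Wl_le.
Qed.

Lemma cardACr n y (A : {set 'I_n * 'I_n}) :
  (forall e, e \in A -> (e.1 < e.2)%N) ->
  (#|A :&: [set e | e.1 \in Wr n y]| <= y.+2 * y.+2)%N.
Proof.
move=> hA; apply: leq_trans (_ : #|setX (Wr n y) (Wr n y)| <= _)%N.
  apply: subset_leq_card; apply/subsetP => e; rewrite !inE => /andP[eA].
  have := hA e eA; case: e eA => a b /= _ hab ha; rewrite ha /=; lia.
by rewrite cardsX leq_mul // Wr_le.
Qed.

Lemma ATv n (A E : {set 'I_n * 'I_n}) v :
  v \in isolatedv E ->
  (forall e : 'I_n * 'I_n, (e.1 < e.2)%N -> e \notin E -> e \in A) ->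
  (n.-1 <= #|A :&: [set e | (e.1 == v) || (e.2 == v)]|)%N.
Proof.
rewrite /isolatedv !inE => /andP[/forallP hI /forallP hT] hA.
pose f (w : 'I_n) := if (w < v)%N then (w, v) else (v, w).
have -> : n.-1 = #|[set~ v]| by rewrite cardsC1 card_ord.
rewrite -(card_in_imset (f := f)).
  apply: subset_leq_card; apply/subsetP => e /imsetP[w]; rewrite !inE => hw ->.
  have hw' : val w != val v by [].
  rewrite /f; case: ifP => hwv /=; rewrite eqxx ?orbT andbT; apply: hA => /=.
  - exact: hwv.
  - exact: hI.
  - move: hwv hw' => /negbT; rewrite -leqNgt => h1 /eqP h2; simpl in h2; lia.
  - exact: hT.
move=> w1 w2; rewrite !inE => h1 h2; rewrite /f.
case: ifP => c1; case: ifP => c2 [] //.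
all: by move=> -> ->.
Qed.

Local Open Scope ring_scope.
Definition Ex (n x y k : nat) (E : {set 'I_n * 'I_n}) : rat :=
  \sum_(F : {set 'I_n * 'I_n}) final_prob x y k E F * (#|isolatedv F|)%:R.

Arguments Ex {n} x y k E.

Lemma sum_pick (T : finType) (G : T) (w : T -> rat) :
  \sum_(F : T) (G == F)%:R * w F = w G.
Proof.
rewrite (bigD1 G) //= eqxx mul1r big1 ?addr0 // => F HF.
by rewrite eq_sym (negbTE HF) mul0r.
Qed.

Lemma Ex0 n x y (E : {set 'I_n * 'I_n}) : Ex x y 0 E = (#|isolatedv E|)%:R.
Proof. by rewrite /Ex /= sum_pick. Qed.

Lemma ExS n x y k (E : {set 'I_n * 'I_n}) :
  Ex x y k.+1 E =
  let A := [set e | addable x y E e] in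
  if A == set0 then (#|isolatedv E|)%:R
  else \sum_(e in A) (#|A|%:R)^-1 *
     (if is_tdg x y (e |: E) then (#|isolatedv (e |: E)|)%:R
      else Ex x y k (e |: E)).
Proof.
rewrite /Ex /=; case: ifP => _; first by rewrite sum_pick.
under eq_bigr do rewrite big_distrl.
rewrite exchange_big; apply: eq_bigr => e _ /=.
under eq_bigr do rewrite -mulrA.
rewrite -big_distrr /=; congr (_ * _).
by case: ifP => _ //; rewrite sum_pick.
Qed.

Lemma ind_sum (P : finType) (A C : {set P}) :
  \sum_(e in A) (e \in C)%:R = #|A :&: C|%:R :> rat.
Proof.
rewrite (big_setID C) /=.
rewrite [X in X + _](eq_bigr (fun _ => 1)); last first.
  by move=> e; rewrite inE => /andP[_ ->].
rewrite [X in _ + X]big1 ?addr0; last first.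
  move=> e; rewrite !inE => /andP[H _]; by rewrite (negbTE H).
by rewrite sumr_const.
Qed.

Lemma race (P : finType) (A C Tv : {set P}) (term : P -> rat) (mf : P -> nat)
  (m Q D : nat) (b : rat) :
  0 <= b -> b <= 1 -> b * D%:R = Q%:R ->
  (#|A :&: C| <= Q)%N -> (D <= #|A :&: Tv|)%N ->
  (forall e, e \in A -> e \in Tv -> term e = 0) ->
  (forall e, e \in A -> 0 <= term e /\ term e <= b ^+ (2 - mf e)) ->
  (forall e, e \in A -> mf e <= m + (e \in C))%N ->
  \sum_(e in A) term e <= #|A|%:R * b ^+ (2 - m).
Proof.
move=> b0 b1 hbD hC hT hz hbd hmf.
case: (leqP 2 m) => hm.
  rewrite (_ : (2 - m = 0)%N); last by lia.
  rewrite expr0 mulr1; apply: le_trans (_ : \sum_(e in A) 1 <= _).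
    apply: ler_sum => e eA; have [_ h] := hbd e eA; apply: le_trans h _.
    exact: exprn_ile1.
  by rewrite sumr_const.
set c := b ^+ (1 - m).
have c0 : 0 <= c by rewrite exprn_ge0.
have e2 : b ^+ (2 - m) = b * c by rewrite /c -exprS; congr (_ ^+ _); lia.
have step : forall e, e \in A ->
   term e <= b * c + (e \in C)%:R * c - (e \in Tv)%:R * (b * c).
  move=> e eA; case eT: (e \in Tv).
    rewrite hz // mul1r addrAC subrr add0r; apply: mulr_ge0 => //.
  rewrite mul0r subr0; have [_ h] := hbd e eA; apply: le_trans h _.
  have hm' := hmf e eA; case eC: (e \in C); rewrite eC /= in hm'.
    rewrite mul1r; apply: le_trans (_ : c <= _).
      by apply: ler_wiXn2l => //; lia.
    by rewrite lerDr mulr_ge0.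
  rewrite mul0r addr0 -e2; apply: ler_wiXn2l => //; lia.
apply: le_trans (ler_sum _ step) _.
rewrite sumrB big_split /= -!big_distrl /= !ind_sum sumr_const e2.
rewrite -[_ *+ _]mulr_natr mulrC.
suff H : #|A :&: C|%:R * c <= #|A :&: Tv|%:R * (b * c) by lra.
apply: le_trans (_ : Q%:R * c <= _).
  by apply: ler_wpM2r => //; rewrite ler_nat.
rewrite -hbD (mulrC b) -mulrA; apply: ler_wpM2r; first exact: mulr_ge0.
by rewrite ler_nat.
Qed.


Lemma Ex_le_iso n x y k (E : {set 'I_n * 'I_n}) :
  Ex x y k E <= (#|isolatedv E|)%:R.
Proof.
elim: k E => [|k IH] E; first by rewrite Ex0.
rewrite ExS /=; case: ifP => // /negbT A0.
set A := [set e | addable x y E e] in A0 *.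
apply: le_trans (_ : \sum_(e in A) (#|A|%:R)^-1 * (#|isolatedv E|)%:R <= _).
  apply: ler_sum => e _; apply: ler_wpM2l; first by rewrite invr_ge0 ler0n.
  have h : (#|isolatedv (e |: E)| <= #|isolatedv E|)%N.
    by apply: subset_leq_card; apply: iso_sub.
  case: ifP => _; first by rewrite ler_nat.
  by apply: le_trans (IH _) _; rewrite ler_nat.
rewrite sumr_const -[_ *+ #|A|]mulr_natl mulrA mulfV ?mul1r //.
by rewrite pnatr_eq0 -lt0n card_gt0.
Qed.

Lemma sum_iso (T : finType) (S B : {set T}) :
  S \subset B -> (#|S|)%:R = \sum_(v in B) (v \in S)%:R :> rat.
Proof. by move=> h; rewrite ind_sum; move/setIidPr: h => ->. Qed.

Definition Q x y := ((x + y).+2 * (x + y).+2)%N.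
Definition beta n x y : rat := (Q x y)%:R / (n.-1)%:R.
Definition ml n x (E : {set 'I_n * 'I_n}) := #|Wl n x :\: initialv E|.
Definition mr n y (E : {set 'I_n * 'I_n}) := #|Wr n y :\: terminalv E|.
Definition psi n x y (E : {set 'I_n * 'I_n}) : rat :=
  beta n x y ^+ (2 - ml x E) + beta n x y ^+ (2 - mr y E).
Definition pre n x y (E : {set 'I_n * 'I_n}) :=
  (x < #|initialv E|)%N && (y < #|terminalv E|)%N.
Definition upper n (E : {set 'I_n * 'I_n}) := forall e, e \in E -> (e.1 < e.2)%N.

Lemma Qge x y : (x.+2 * x.+2 <= Q x y)%N /\ (y.+2 * y.+2 <= Q x y)%N.
Proof. rewrite /Q; split; apply: leq_mul; lia. Qed.

Section Good.
Variables (n x y : nat).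
Hypotheses (x0 : (0 < x)%N) (y0 : (0 < y)%N) (hQ : (Q x y <= n.-1)%N).

Lemma n_big : (x.+2 <= n)%N /\ (y.+2 <= n)%N /\ (2 <= n)%N.
Proof. have [h1 h2] := Qge x y; move: (hQ) h1 h2; rewrite /Q; nia. Qed.

Lemma beta0 : 0 <= beta n x y.
Proof. by rewrite /beta divr_ge0 ?ler0n. Qed.

Lemma beta1 : beta n x y <= 1.
Proof.
have [_ [_ h]] := n_big.
rewrite /beta ler_pdivrMr ?mul1r ?ler_nat // ltr0n; lia.
Qed.

Lemma betaD : beta n x y * (n.-1)%:R = (Q x y)%:R.
Proof.
have [_ [_ h]] := n_big.
rewrite /beta -mulrA mulVf ?mulr1 // pnatr_eq0; lia.
Qed.

Lemma psi_post (F : {set 'I_n * 'I_n}) : ~~ pre x y F -> 1 <= psi x y F.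
Proof.
have [hx [hy _]] := n_big.
rewrite /pre negb_and -!leqNgt => /orP[] h.
  have : (2 <= ml x F)%N by apply: m_post h; apply: Wl_ge.
  move=> hm; rewrite /psi (_ : (2 - ml x F)%N = 0%N) ?expr0; last by lia.
  by rewrite lerDl exprn_ge0 // beta0.
have : (2 <= mr y F)%N by apply: m_post h; apply: Wr_ge.
move=> hm; rewrite /psi (_ : (2 - mr y F)%N = 0%N) ?expr0; last by lia.
by rewrite lerDr exprn_ge0 // beta0.
Qed.

Lemma addable_up (E : {set 'I_n * 'I_n}) e :
  e \in [set e | addable x y E e] -> (e.1 < e.2)%N /\ e \notin E.
Proof. by rewrite inE /addable => /and4P[-> -> _ _]. Qed.

Lemma perv (E : {set 'I_n * 'I_n}) v :
  pre x y E -> v \in isolatedv E ->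
  let A := [set e | addable x y E e] in
  \sum_(e in A) (v \in isolatedv (e |: E))%:R * psi x y (e |: E)
    <= (#|A|)%:R * psi x y E.
Proof.
rewrite /pre => /andP[hpx hpy] hv; set A := [set e | addable x y E e].
have [hx [hy h2]] := n_big; have [q1 q2] := Qge x y.
have hA1 : forall e, e \in A -> (e.1 < e.2)%N by move=> e /addable_up[].
have hA2 : forall e : 'I_n * 'I_n, (e.1 < e.2)%N -> e \notin E -> e \in A.
  by move=> e h1 h2'; rewrite inE addable_pre // h1.
have hz : forall e, e \in A -> e \in [set e | (e.1 == v) || (e.2 == v)] ->
    (v \in isolatedv (e |: E))%:R * psi x y (e |: E) = 0.
  by move=> e _; rewrite inE => /iso_touch /negbTE ->; rewrite mul0r.
rewrite mulrDr; under eq_bigr do rewrite mulrDr; rewrite big_split /=.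
apply: lerD.
- apply: (@race _ A [set e | e.2 \in Wl n x] [set e | (e.1 == v) || (e.2 == v)]
     _ (fun e => ml x (e |: E)) _ (Q x y) n.-1).
  + exact: beta0.
  + exact: beta1.
  + exact: betaD.
  + exact: leq_trans (cardACl x hA1) q1.
  + exact: ATv hv hA2.
  + move=> e eA eT; rewrite inE in eT; by rewrite (negbTE (iso_touch E eT)) mul0r.
  + move=> e eA; split; first by rewrite mulr_ge0 ?ler0n ?exprn_ge0 ?beta0.
    rewrite -[X in _ <= X]mul1r; apply: ler_wpM2r; first by rewrite exprn_ge0 ?beta0.
    by case: (_ \in _).
  + move=> e eA; rewrite inE; apply: m_add; exact: I_add.
- apply: (@race _ A [set e | e.1 \in Wr n y] [set e | (e.1 == v) || (e.2 == v)]
     _ (fun e => mr y (e |: E)) _ (Q x y) n.-1).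
  + exact: beta0.
  + exact: beta1.
  + exact: betaD.
  + exact: leq_trans (cardACr y hA1) q2.
  + exact: ATv hv hA2.
  + move=> e eA eT; rewrite inE in eT; by rewrite (negbTE (iso_touch E eT)) mul0r.
  + move=> e eA; split; first by rewrite mulr_ge0 ?ler0n ?exprn_ge0 ?beta0.
    rewrite -[X in _ <= X]mul1r; apply: ler_wpM2r; first by rewrite exprn_ge0 ?beta0.
    by case: (_ \in _).
  + move=> e eA; rewrite inE; apply: m_add; exact: T_add.
Qed.

Lemma L2 k (E : {set 'I_n * 'I_n}) :
  upper E -> pre x y E -> (n * n <= #|E| + k)%N ->
  Ex x y k E <= (#|isolatedv E|)%:R * psi x y E.
Proof.
have [hx [hy hn2]] := n_big.
elim: k E => [|k IH] E hu hp hk.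
  exfalso.
  have hn0 : (0 < n)%N by lia.
  pose u : 'I_n := Ordinal hn0.
  have hc : (u, u) \in ~: E by rewrite inE; apply/negP => /hu /=; rewrite ltnn.
  have := cardsC E; rewrite card_prod card_ord.
  have : (0 < #|~: E|)%N by apply/card_gt0P; exists (u, u).
  lia.
rewrite ExS /=.
have hA0 : [set e | addable x y E e] != set0.
  move: (hp); rewrite /pre => /andP[hpx hpy].
  have : (1 < #|initialv E|)%N by lia.
  case/card_gt1P => a [b [ha hb hab]].
  apply/set0Pn.
  have key : forall a b : 'I_n, (a < b)%N -> b \in initialv E -> addable x y E (a, b).
    move=> a' b' hab' hb'; rewrite addable_pre //= hab' /=.
    by move: hb'; rewrite inE => /forallP.
  case: (ltngtP a b) => h.
  - by exists (a, b); rewrite inE key.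
  - by exists (b, a); rewrite inE key.
  - by move: hab; rewrite (val_inj h) eqxx.
rewrite (negbTE hA0).
set A := [set e | addable x y E e] in hA0 *.
apply: le_trans (_ : \sum_(e in A) (#|A|%:R)^-1 *
   ((#|isolatedv (e |: E)|)%:R * psi x y (e |: E)) <= _).
  apply: ler_sum => e eA; apply: ler_wpM2l; first by rewrite invr_ge0 ler0n.
  have [he1 he2] := addable_up eA.
  have hu' : upper (e |: E).
    by move=> f; rewrite !inE => /orP[/eqP -> // | /hu].
  have hiso0 : 0 <= (#|isolatedv (e |: E)|)%:R :> rat by rewrite ler0n.
  case: ifP => htdg.
    apply: ler_peMr => //; apply: psi_post.
    by move: htdg; rewrite /is_tdg /pre => /andP[/eqP -> _]; rewrite ltnn.
  case hp': (pre x y (e |: E)).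
    by apply: IH => //; rewrite cardsU1 he2 /=; move: hk; rewrite addnS -add1n addnA.
  apply: le_trans (Ex_le_iso _ _ _ _) _.
  by apply: ler_peMr => //; apply: psi_post; rewrite hp'.
rewrite -big_distrr /=.
under eq_bigr => e _ do rewrite (sum_iso (iso_sub e E)) big_distrl /=.
rewrite exchange_big /=.
apply: le_trans (_ : (#|A|%:R)^-1 * \sum_(v in isolatedv E) (#|A|%:R * psi x y E) <= _).
  apply: ler_wpM2l; first by rewrite invr_ge0 ler0n.
  by apply: ler_sum => v hv; apply: (perv hp hv).
rewrite sumr_const -[_ *+ #|isolatedv E|]mulr_natl mulrCA [X in _ * X <= _]mulrA mulVf ?mul1r //.
by rewrite pnatr_eq0 -lt0n card_gt0.
Qed.

End Good.

Local Close Scope ring_scope.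

Lemma init0 n : initialv (set0 : {set 'I_n * 'I_n}) = setT.
Proof. by apply/setP => v; rewrite !inE; apply/forallP => u; rewrite inE. Qed.
Lemma term0 n : terminalv (set0 : {set 'I_n * 'I_n}) = setT.
Proof. by apply/setP => v; rewrite !inE; apply/forallP => u; rewrite inE. Qed.

Lemma final_arith (n q K : nat) (eps : rat) :
  (0 < eps)%R -> (eps^-1 < K%:R)%R -> (0 < q)%N -> (q + 4 * q * q * K).+2 <= n ->
  (n%:R * ((q%:R / (n.-1)%:R) ^+ 2 + (q%:R / (n.-1)%:R) ^+ 2) < eps)%R.
Proof.
move=> e0 hK q0 hn.
set D := n.-1.
have hD : (4 * q * q * K < D)%N by rewrite /D; lia.
have hnD : (2 * n * q * q <= 4 * D * q * q)%N by rewrite /D; nia.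
have D0 : (0 < D%:R :> rat)%R by rewrite ltr0n; lia.
have -> : (n%:R * ((q%:R / D%:R) ^+ 2 + (q%:R / D%:R) ^+ 2) =
   (2 * n * q * q)%N%:R / (D%:R * D%:R) :> rat)%R.
  by rewrite !natrM; field; rewrite lt0r_neq0.
rewrite ltr_pdivrMr ?mulr_gt0 //.
apply: le_lt_trans (_ : ((4 * D * q * q)%N%:R < _)%R); first by rewrite ler_nat.
have eK : (1 < eps * K%:R)%R.
  by rewrite -(ltr_pM2l e0) mulfV ?gt_eqF // in hK.
have hD' : ((4 * q * q)%N%:R * K%:R < D%:R :> rat)%R by rewrite -natrM ltr_nat.
have q0' : (0 < (4 * q * q)%N%:R :> rat)%R by rewrite ltr0n; nia.
have h4 : ((4 * q * q)%N%:R < eps * D%:R :> rat)%R.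
  apply: lt_le_trans (_ : (eps * ((4 * q * q)%N%:R * K%:R) <= _)%R); last first.
    by rewrite ler_pM2l // ltW.
  rewrite mulrCA -[X in (X < _)%R]mulr1 ltr_pM2l //.
have -> : ((4 * D * q * q)%N%:R = (4 * q * q)%N%:R * D%:R :> rat)%R.
  by rewrite -natrM; congr (_%:R)%R; lia.
by rewrite mulrA ltr_pM2r.
Qed.

Unset Implicit Arguments. Set Strict Implicit.

Theorem mainTheorem17 (x y : nat) :
  (0 < x)%N -> (0 < y)%N ->
  forall eps : rat, (0 < eps)%R ->
    exists N : nat, forall n : nat, (N <= n)%N -> (expected_isolated n x y < eps)%R.
Proof.
move=> x0 y0 eps e0.
pose K := Num.Def.archi_bound (eps^-1).
have hK : (eps^-1 < K%:R)%R by apply: archi_boundP; rewrite invr_ge0 ltW.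
exists (Q x y + 4 * Q x y * Q x y * K).+2 => n hn.
have hQ : (Q x y <= n.-1)%N by lia.
have hq0 : (0 < Q x y)%N by rewrite /Q; lia.
have hu : upper (set0 : {set 'I_n * 'I_n}) by move=> e; rewrite inE.
have hp : pre x y (set0 : {set 'I_n * 'I_n}).
  by rewrite /pre init0 term0 cardsT card_ord; apply/andP; split; rewrite /Q in hn; lia.
have := L2 x0 y0 hQ (k := n * n) hu hp; rewrite cards0 add0n leqnn => /(_ isT) h.
change (Ex x y (n * n) (set0 : {set 'I_n * 'I_n}) < eps)%R; apply: le_lt_trans h _.
rewrite /isolatedv init0 term0 setIT cardsT card_ord /psi /ml /mr init0 term0 !setDT !cards0.
rewrite /beta subn0; apply: final_arith => //; lia.
Qed.
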